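(* There exist absolute constants $c_1,c_2>0$ such that the following holds. Suppose $\delta\le e^{-1}$, $C_{n,\delta}\ge c_1\log(n/\delta)$, and $k\ge c_2\, b\,(C_{n,\delta}+1)\max\{\Omega_{\max},E_{\max}\}$. Then $$P\left(\exists (i,j)\in E:\ |F_{ij}-p_{ij}|\ge\sqrt{\frac{C_{n,\delta}}{k\,v_{ij}}}\right)\le\delta.$$
   Context: $G=(V,E)$ is an undirected connected graph on $V=\{1,\dots,n\}$, each edge with a fixed orientation $(i,j)$. Weights $w\in\mathbb{R}^n$ are positive with $b\ge\max_{i,j}w_i/w_j$. For each edge $(i,j)\in E$, $k$ independent comparisons are performed, each won by $i$ with probability $p_{ij}=w_i/(w_i+w_j)$ (independent across edges); $F_{ij}$ is the fraction of them won by $i$. $\rho_{ij}=w_i/w_j$ and $v_{ij}=\rho_{ij}+2+\rho_{ij}^{-1}=1/(p_{ij}(1-p_{ij}))$. $\Omega_{ij}=(e_i-e_j)^TL^\dagger(e_i-e_j)$ is the effective resistance ($L$ the Laplacian, $L^\dagger$ its pseudoinverse), $\Omega_{\max}=\max_{i,j}\Omega_{ij}$. $E_{ij}$ is the set of edges on at least one simple path from $i$ to $j$, $E_{\max}=\max_{i,j}|E_{ij}|$. $C_{n,\delta}$ is a parameter. *)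

(* Defs.v *)
From HB Require Import structures.
From mathcomp Require Import all_boot all_order all_algebra.
From mathcomp Require Import boolp reals.
From mathcomp Require Import sequences.
From mathcomp.analysis Require Import exp.
Set Implicit Arguments. Unset Strict Implicit. Unset Printing Implicit Defensive.
Import Order.TTheory GRing.Theory Num.Theory.
Local Open Scope ring_scope.

Section Defs.
Variables (R : realType) (n : nat).
Implicit Types (E : {set 'I_n * 'I_n}) (w : 'I_n -> R).

Definition adj E : rel 'I_n := fun u v => ((u, v) \in E) || ((v, u) \in E).

(* E is a simple undirected graph, each edge stored once with a fixed orientation *)
Definition oriented_simple_graph E : Prop :=
  (forall e, e \in E -> e.1 != e.2) /\
  (forall i j, (i, j) \in E -> (j, i) \notin E).

Definition connected_graph E : Prop := forall i j : 'I_n, connect (adj E) i j.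

Definition bvec (i j : 'I_n) : 'cV[R]_n :=
  \col_l ((l == i)%:R - (l == j)%:R).

Definition laplacian E : 'M[R]_n :=
  \sum_(e in E) (bvec e.1 e.2 *m (bvec e.1 e.2)^T).

Definition is_MP_pinv (A X : 'M[R]_n) : Prop :=
  [/\ A *m X *m A = A, X *m A *m X = X,
      (A *m X)^T = A *m X & (X *m A)^T = X *m A].

Definition eff_res (Ldag : 'M[R]_n) (i j : 'I_n) : R :=
  ((bvec i j)^T *m Ldag *m bvec i j) ord0 ord0.

Definition Omega_max (Ldag : 'M[R]_n) : R :=
  \big[Num.max/0]_(ij : 'I_n * 'I_n) eff_res Ldag ij.1 ij.2.

Definition edges_on_simple_paths E (i j : 'I_n) : {set 'I_n * 'I_n} :=
  [set e in E | `[< exists p : seq 'I_n,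
      [/\ path (adj E) i p, last i p = j, uniq (i :: p) &
          ((e \in zip (i :: p) p) || ((e.2, e.1) \in zip (i :: p) p))] >]].

Definition E_max E : nat :=
  (\max_(ij : 'I_n * 'I_n) #|edges_on_simple_paths E ij.1 ij.2|)%N.

Definition pwin w (i j : 'I_n) : R := w i / (w i + w j).
Definition vcoef w (i j : 'I_n) : R := w i / w j + 2 + w j / w i.

(* Outcome space: omega (e, t) = true iff i wins the t-th comparison on the
   pair e = (i,j).  Coordinates are independent Bernoulli(p_e).  (Coordinates
   of pairs that are not edges are irrelevant dummies and marginalise out.) *)
Definition outcome (k : nat) := {ffun ('I_n * 'I_n) * 'I_k -> bool}.

Definition outcome_prob w k (om : outcome k) : R :=
  \prod_(x : ('I_n * 'I_n) * 'I_k)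
     (if om x then pwin w x.1.1 x.1.2 else 1 - pwin w x.1.1 x.1.2).

Definition Prob w k (A : pred (outcome k)) : R :=
  \sum_(om : outcome k | A om) outcome_prob w om.

Definition Frac k (om : outcome k) (i j : 'I_n) : R :=
  (\sum_(t < k) (om ((i, j), t) : nat))%:R / k%:R.

End Defs.

Arguments Frac {R n k} om i j.
Arguments laplacian {R n} E.

(* Main.v *)
Require Import Defs.
From HB Require Import structures.
From mathcomp Require Import all_boot all_order all_algebra.
From mathcomp Require Import boolp reals.
From mathcomp Require Import sequences.
From mathcomp.analysis Require Import exp.
From mathcomp Require Import ring lra.
Import Order.TTheory GRing.Theory Num.Theory.
Local Open Scope ring_scope.

Lemma exp_quad (R : realType) (x : R) : x <= 1/2 -> expR x <= 1 + x + 2 * x^+2.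
Proof.
move=> hx.
have h := expR_ge1Dx (-x).
have hy : 0 < expR (-x) by apply: expR_gt0.
have -> : expR x = 1 / expR (-x) by rewrite expRN invrK mul1r.
rewrite ler_pdivrMr //.
have hq : 0 <= 1 + x + 2 * x^+2 by nra.
apply: le_trans (ler_wpM2l hq h).
nra.
Qed.

Lemma prod_sel (R : realType) n k (e : 'I_n * 'I_n) (F : ('I_n * 'I_n) * 'I_k -> R) :
  \prod_(x : ('I_n * 'I_n) * 'I_k) (if x.1 == e then F x else 1) = \prod_(t < k) F (e, t).
Proof.
rewrite (eq_bigr (fun x => (fun a t => if a == e then F (a, t) else 1) x.1 x.2)); last by case.
rewrite -(pair_bigA _ (fun a t => if a == e then F (a, t) else 1)) /=.
rewrite (bigD1 e) //= eqxx [X in _ * X]big1 ?mulr1 // => a /negbTE ha.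
by apply: big1 => t _; rewrite ha.
Qed.

Lemma pwin_ge0 (R : realType) n (w : 'I_n -> R) i j :
  (forall i, 0 < w i) -> 0 <= pwin w i j <= 1.
Proof.
move=> hw; have hi := hw i; have hj := hw j.
rewrite /pwin; apply/andP; split; first by apply: divr_ge0; lra.
by rewrite ler_pdivrMr ?mul1r; lra.
Qed.

Lemma mgf (R : realType) n (w : 'I_n -> R) k (e : 'I_n * 'I_n) (lam s : R) :
  (forall i, 0 < w i) -> 0 <= lam -> lam <= 1/2 -> s * s = 1 ->
  \sum_(om : outcome n k) outcome_prob w om *
     \prod_(t < k) expR (lam * s * ((om (e, t) : nat)%:R - pwin w e.1 e.2))
  <= expR (k%:R * (2 * lam^+2 * (pwin w e.1 e.2 * (1 - pwin w e.1 e.2)))).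
Proof.
move=> hw hl0 hl1 hs.
set p := pwin w e.1 e.2.
pose g (b : bool) := expR (lam * s * ((b : nat)%:R - p)).
pose H (x : ('I_n * 'I_n) * 'I_k) (b : bool) :=
  (if b then pwin w x.1.1 x.1.2 else 1 - pwin w x.1.1 x.1.2) *
  (if x.1 == e then g b else 1).
have E1 : forall om : outcome n k,
    outcome_prob w om * \prod_(t < k) g (om (e, t)) = \prod_x H x (om x).
  by move=> om; rewrite /outcome_prob /H big_split /= prod_sel.
rewrite (eq_bigr _ (fun om _ => E1 om)).
rewrite -(bigA_distr_bigA H).
change (\prod_x \sum_b H x b <= expR (k%:R * (2 * lam^+2 * (p * (1 - p))))).
pose M := p * g true + (1 - p) * g false.
have E2 : forall x, \sum_b H x b = if x.1 == e then M else 1.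
  move=> x; rewrite big_bool /H; case: eqP => [->|_]; last by rewrite /= !mulr1 addrC subrK.
  by [].
rewrite (eq_bigr _ (fun x _ => E2 x)) prod_sel prodr_const card_ord expRM_natl.
have hp := @pwin_ge0 R n w e.1 e.2 hw; rewrite -/p in hp; case/andP: hp => hp0 hp1.
have hM0 : 0 <= M by rewrite /M; apply: addr_ge0; apply: mulr_ge0; rewrite ?expR_ge0; lra.
apply: lerXn2r; rewrite ?nnegrE ?expR_ge0 //.
have ht : g true <= 1 + lam * s * (1 - p) + 2 * (lam * s * (1 - p))^+2.
  apply: (@exp_quad R (lam * s * (1 - p))).
  have : s <= 1 by nra.
  have : -1 <= s by nra.
  move=> h1 h2; have hy : s * (1 - p) <= 1 by nra.
  rewrite -mulrA; nra.
have hf : g false <= 1 + lam * s * (0 - p) + 2 * (lam * s * (0 - p))^+2.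
  apply: (@exp_quad R (lam * s * (0 - p))).
  have : s <= 1 by nra.
  have : -1 <= s by nra.
  move=> h1 h2; have hy : s * (0 - p) <= 1 by nra.
  rewrite -mulrA; nra.
apply: le_trans (expR_ge1Dx _).
rewrite /M.
apply: le_trans (lerD (ler_wpM2l hp0 ht) (ler_wpM2l _ hf)) _; first lra.
have hs2 : s ^+ 2 = 1 by rewrite expr2.
rewrite !exprMn hs2 !mulr1 sub0r sqrrN.
rewrite le_eqVlt; apply/orP; left; apply/eqP; ring.
Qed.

Definition Tm (R : realType) n k (w : 'I_n -> R) (C : R) (e : 'I_n * 'I_n) (s : R)
  (om : outcome n k) : R :=
  expR (Num.sqrt (C / (k%:R * vcoef w e.1 e.2)) * vcoef w e.1 e.2 / 4 * k%:R *
        (s * (Frac om e.1 e.2 - pwin w e.1 e.2) - Num.sqrt (C / (k%:R * vcoef w e.1 e.2)))).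

Arguments Tm {R n k} w C e s om.

Lemma edge_bound (R : realType) n k (w : 'I_n -> R) (e : 'I_n * 'I_n) (C b s : R) :
  (forall i, 0 < w i) -> (forall i j, w i / w j <= b) -> 0 <= C ->
  b * C <= k%:R -> (0 < k)%N -> s * s = 1 ->
  \sum_(om : outcome n k) outcome_prob w om * Tm w C e s om <= expR (- (C / 8)).
Proof.
move=> hw hb hC hk k0 hs.
rewrite /Tm.
set v := vcoef w e.1 e.2.
set p := pwin w e.1 e.2.
set t := Num.sqrt _.
have w1 := hw e.1; have w2 := hw e.2.
have hkr : 0 < k%:R :> R by rewrite ltr0n.
have hv : 0 < v.
  rewrite /v /vcoef; apply: addr_gt0; first apply: addr_gt0 => //.
    by apply: divr_gt0.
  by apply: divr_gt0.
have hpq : p * (1 - p) * v = 1.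
  rewrite /p /v /pwin /vcoef; field.
  apply/and3P; split; rewrite ?lt0r_neq0 //; lra.
have ht0 : 0 <= t by apply: sqrtr_ge0.
have ht2 : t ^+ 2 = C / (k%:R * v).
  by rewrite sqr_sqrtr //; apply: divr_ge0 => //; apply: mulr_ge0; lra.
have hvb : v <= 4 * b.
  have h1 := hb e.1 e.2; have h2 := hb e.2 e.1; have h3 := hb e.1 e.1.
  rewrite divff ?lt0r_neq0 // in h3.
  rewrite /v /vcoef; lra.
have htv : t ^+ 2 * v ^+ 2 <= 4.
  rewrite ht2 expr2 mulrA.
  have -> : C / (k%:R * v) * v * v = C * v / k%:R by field; apply/andP; split; rewrite lt0r_neq0.
  rewrite ler_pdivrMr //; nra.
set lam := t * v / 4.
have hl0 : 0 <= lam by rewrite /lam; apply: divr_ge0 => //; apply: mulr_ge0 => //; lra.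
have hl1 : lam <= 1 / 2.
  have : t * v <= 2 by nra.
  rewrite /lam; lra.
pose g (b : bool) := expR (lam * s * ((b : nat)%:R - p)).
have E1 : forall om : outcome n k,
   expR (lam * k%:R * (s * (Frac om e.1 e.2 - p) - t)) =
   (\prod_(t' < k) g (om (e, t'))) * expR (- (lam * k%:R * t)).
  move=> om; rewrite /g -expR_sum -expRD; congr expR.
  rewrite -mulr_sumr sumrB sumr_const card_ord -natr_sum.
  rewrite /Frac.
  rewrite -[p *+ k]mulr_natl.
  set S := (X in X / k%:R).
  have -> : (\sum_i (om (e, i) : nat))%:R = S by rewrite /S -surjective_pairing.
  field; rewrite lt0r_neq0 //.
rewrite (eq_bigr _ (fun om _ => congr1 (fun x => outcome_prob w om * x) (E1 om))).
under eq_bigr do rewrite mulrA.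
rewrite -mulr_suml.
apply: le_trans (ler_wpM2r (expR_ge0 _) (@mgf R n w k e lam s hw hl0 hl1 hs)) _.
rewrite -expRD ler_expR -/p.
have -> : k%:R * (2 * lam ^+ 2 * (p * (1 - p))) = k%:R * t^+2 * v / 8.
  rewrite /lam.
  have hv0 : v != 0 by rewrite lt0r_neq0.
  have -> : p * (1 - p) = v^-1 by apply: (mulIf hv0); rewrite hpq mulVf.
  by field.
have hv0 : v != 0 by rewrite lt0r_neq0.
have hk0 : k%:R != 0 :> R by rewrite lt0r_neq0.
have -> : lam * k%:R * t = k%:R * t^+2 * v / 4 by rewrite /lam; field.
rewrite ht2.
have -> : k%:R * (C / (k%:R * v)) = C / v by field; rewrite hv0 hk0.
have -> : C / v * v = C by field.
lra.
Qed.

Lemma markov_sum (R : realType) (T : finType) (f u : T -> R) (P : pred T) :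
  (forall x, 0 <= f x) -> (forall x, 0 <= u x) -> (forall x, P x -> 1 <= u x) ->
  \sum_(x | P x) f x <= \sum_x f x * u x.
Proof.
move=> hf hu hP; rewrite big_mkcond; apply: ler_sum => x _.
case: ifP => Px; first by apply: ler_peMr => //; apply: hP.
by apply: mulr_ge0.
Qed.

Lemma outcome_prob_ge0 (R : realType) n k (w : 'I_n -> R) (om : outcome n k) :
  (forall i, 0 < w i) -> 0 <= outcome_prob w om.
Proof.
move=> hw; rewrite /outcome_prob; apply: prodr_ge0 => x _.
have /andP[h0 h1] := @pwin_ge0 R n w x.1.1 x.1.2 hw.
by case: (om x) => //; rewrite subr_ge0.
Qed.

Theorem lemma1 (R : realType) :
  exists c1 c2 : R, 0 < c1 /\ 0 < c2 /\
  forall (n : nat) (E : {set 'I_n * 'I_n}) (w : 'I_n -> R) (b : R)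
         (Ldag : 'M[R]_n) (delta C : R) (k : nat),
    oriented_simple_graph E ->
    connected_graph E ->
    (forall i, 0 < w i) ->
    (forall i j, w i / w j <= b) ->
    is_MP_pinv (laplacian E) Ldag ->
    0 < delta -> delta <= expR (-1) ->
    c1 * ln (n%:R / delta) <= C ->
    c2 * b * (C + 1) * Num.max (Omega_max Ldag) (E_max E)%:R <= k%:R ->
    Prob w (fun om : outcome n k =>
      [exists e in E,
        Num.sqrt (C / (k%:R * vcoef w e.1 e.2))
          <= `|Frac om e.1 e.2 - pwin w e.1 e.2| ]) <= delta.
Proof.
exists 24, 1; split; first lra; split; first lra.
move=> n E w b Ldag delta C k Hsimple Hconn Hw Hb Hpinv Hd Hde HC Hk.
case: (posnP #|E|) => [E0|Epos].
  rewrite /Prob big_pred0; first lra.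
  by move=> om; apply/negbTE/existsPn => e; rewrite (cards0_eq E0) inE.
case/card_gt0P: Epos => e0 e0E.
have n0 : (0 < n)%N by case: e0 e0E => [[i Hi] j] _; apply: leq_ltn_trans Hi.
have hb1 : 1 <= b by have := Hb e0.1 e0.1; rewrite divff // lt0r_neq0.
have hE1 : 1 <= (E_max E)%:R :> R.
  rewrite ler1n /E_max.
  have hm := @leq_bigmax _ (fun ij : 'I_n * 'I_n => #|edges_on_simple_paths E ij.1 ij.2|) e0. apply: (leq_trans _ hm).
  apply/card_gt0P; exists e0.
  clear hm; case: e0 e0E => i j eE /=.
  rewrite inE eE /=; apply/asboolP; exists [:: j]; split => //=.
  - by rewrite /adj eE.
  - by rewrite inE andbT; apply: (Hsimple.1 (i, j) eE).
  - by rewrite inE eqxx.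
have hmax : 1 <= Num.max (Omega_max Ldag) (E_max E)%:R.
  by apply: le_trans hE1 _; rewrite le_max lexx orbT.
have hN : 1 <= n%:R :> R by rewrite ler1n.
have hd2 : delta <= 1 / 2.
  apply: le_trans Hde _.
  have h := expR_ge1Dx (1 : R).
  rewrite expRN -[X in X <= _]mul1r ler_pdivrMr ?expR_gt0 //; lra.
have hL : 1 <= ln (n%:R / delta).
  rewrite -[X in X <= _](expRK 1) ler_ln ?posrE ?expR_gt0 ?divr_gt0 //; last lra.
  rewrite ler_pdivlMr // mulrC.
  apply: le_trans (ler_wpM2r (expR_ge0 1) Hde) _.
  by rewrite -expRD addNr expR0.
have hC : 24 <= C by lra.
have hk : b * C <= k%:R.
  have : 0 <= b * (C + 1) by nra.
  nra.
have k0 : (0 < k)%N by rewrite -(ltr0n R); nra.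
pose u (om : outcome n k) :=
  \sum_(e in E) (Tm w C e 1 om + Tm w C e (-1) om).
apply: (le_trans (@markov_sum R _ (fun om => outcome_prob w om) u _ _ _ _)).
- by move=> om; apply: outcome_prob_ge0.
- by move=> om; apply: sumr_ge0 => e _; apply: addr_ge0; apply: expR_ge0.
- move=> om /existsP [e /andP [eE He]].
  rewrite /u (bigD1 e) //=.
  rewrite -[X in X <= _]addr0; apply: lerD; last by apply: sumr_ge0 => e' _; apply: addr_ge0; apply: expR_ge0.
  rewrite /Tm.
  set v := vcoef w e.1 e.2.
  set t := Num.sqrt _.
  set x := Frac om e.1 e.2 - pwin w e.1 e.2.
  have hv : 0 < v.
    have w1 := Hw e.1; have w2 := Hw e.2.
    rewrite /v /vcoef; apply: addr_gt0; first apply: addr_gt0 => //.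
      by apply: divr_gt0.
    by apply: divr_gt0.
  have ht0 : 0 <= t by apply: sqrtr_ge0.
  have hl : 0 <= t * v / 4 * k%:R.
    by apply: mulr_ge0; [apply: divr_ge0; [apply: mulr_ge0; lra|lra]|apply: ler0n].
  case: (lerP 0 x) => hx.
  + rewrite ger0_norm // in He.
    rewrite -[X in X <= _]addr0; apply: lerD; last by apply: expR_ge0.
    apply: le_trans (expR_ge1Dx _); rewrite lerDl; apply: mulr_ge0 => //; rewrite mul1r subr_ge0.
    exact: He.
  + rewrite ltr0_norm // in He.
    rewrite -[X in X <= _]add0r; apply: lerD; first by apply: expR_ge0.
    apply: le_trans (expR_ge1Dx _); rewrite lerDl; apply: mulr_ge0 => //; rewrite mulN1r subr_ge0.
    exact: He.
rewrite /u.
under eq_bigr do rewrite mulr_sumr.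
rewrite exchange_big /=.
apply: (@le_trans _ _ (\sum_(e in E) (expR (- (C / 8)) *+ 2))).
  apply: ler_sum => e eE; rewrite (eq_bigr _ (fun om _ => mulrDr _ _ _)) big_split /= mulr2n.
  apply: lerD; apply: (@edge_bound R n k w e C b) => //; lra.
rewrite sumr_const -mulrnA.
set X := expR (- (C / 8)).
have hX0 : 0 <= X by apply: expR_ge0.
have hX : X * (n%:R / delta) ^+ 3 <= 1.
  rewrite -(@lnK R (n%:R / delta)); last by rewrite posrE divr_gt0 // ltr0n.
  rewrite -expRM_natl /X -expRD -[X in _ <= X]expR0 ler_expR; lra.
have hcard : (#|E| <= n * n)%N.
  by apply: leq_trans (max_card E) _; rewrite card_prod card_ord.
have hK : #|E|%:R <= n%:R * n%:R :> R by rewrite -natrM ler_nat.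
rewrite -mulr_natr natrM.
set N := n%:R in hN hX hK *.
set K := #|E|%:R in hK *.
have hX' : X * N ^+ 3 <= delta ^+ 3.
  by move: hX; rewrite expr_div_n mulrA ler_pdivrMr ?exprn_gt0 // mul1r.
have h1 : X * (2 * K) <= X * (2 * (N * N)).
  by apply: ler_wpM2l => //; lra.
apply: le_trans h1 _.
have hN0 : 0 < N by apply: lt_le_trans ltr01 hN.
rewrite -(ler_pM2l hN0).
have -> : N * (X * (2 * (N * N))) = 2 * (X * N ^+ 3) by ring.
have hd3 : delta ^+ 3 * 2 <= N * delta.
  have : delta ^+ 2 * 2 <= N by rewrite expr2; nra.
  have -> : delta ^+ 3 * 2 = (delta ^+ 2 * 2) * delta by ring.
  by move=> h; apply: ler_wpM2r => //; lra.
lra.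
Qed.
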